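(* Let $M$ be a graded quasi-primaryful $R$-module. Then for every graded submodule $K$ of $M$, $$\varphi(qp\text{-}V_M^g(K))=V_{\overline R}^g\big(\overline{Gr((K:_RM))}\big)$$ and $$\varphi\big(qp.Spec_g(M)\setminus qp\text{-}V_M^g(K)\big)=Spec_g(\overline R)\setminus V_{\overline R}^g\big(\overline{Gr((K:_RM))}\big);$$ i.e., $\varphi$ is both closed and open.
   Context: $R=\bigoplus_{g\in G}R_g$ is a graded commutative ring with identity graded by a group $G$, $h(R)=\bigcup_g R_g$; $M$ is a graded $R$-module, $h(M)$ its homogeneous elements. $Gr(I)$ is the graded radical of a graded ideal $I$. $Spec_g(R)$: graded prime ideals. $(K:_RM)=\{r: rM\subseteq K\}$. Graded prime submodule: proper graded $P$ with $rm\in P$ ($r\in h(R), m\in h(M)$) implying $m\in P$ or $r\in(P:_RM)$. $Gr_M(K)$: intersection of graded prime submodules containing $K$ ($M$ if none). Graded primeful property of $K$: for each graded prime $p\supseteq(K:_RM)$ there is a graded prime submodule $P\supseteq K$ with $(P:_RM)=p$. Graded quasi-primary submodule: proper graded $Q$ with $rm\in Q$ ($r\in h(R),m\in h(M)$) implying $r\in Gr((Q:_RM))$ or $m\in Gr_M(Q)$. $qp.Spec_g(M)$: graded quasi-primary submodules with the graded primeful property. $qp\text{-}V_M^g(K)=\{Q\in qp.Spec_g(M): Gr((Q:_RM))\supseteq Gr((K:_RM))\}$; these are the closed sets of the quasi-Zariski topology. $\overline R=R/\mathrm{Ann}(M)$, $\overline I=I/\mathrm{Ann}(M)$; $V_{\overline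 R}^g(\overline I)$ is the set of graded prime ideals of $\overline R$ containing $\overline I$ (Zariski closed sets of $Spec_g(\overline R)$). Natural map $\varphi:qp.Spec_g(M)\to Spec_g(\overline R)$, $\varphi(Q)=\overline{(Gr_M(Q):_RM)}=\overline{Gr((Q:_RM))}$. A graded quasi-primary ideal of $R$ is a proper graded ideal $q$ with $ab\in q$ ($a,b\in h(R)$) implying $a\in Gr(q)$ or $b\in Gr(q)$. $M$ is graded quasi-primaryful if $M=0$, or $M\neq0$ and for every graded quasi-primary ideal $q$ of $R$ containing $\mathrm{Ann}(M)$ there exists $Q\in qp.Spec_g(M)$ with $Gr((Q:_RM))=Gr(q)$. *)

(* Defs.v *)
From HB Require Import structures.
From mathcomp Require Import all_boot all_order all_algebra.


Set Implicit Arguments.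
Unset Strict Implicit.
Unset Printing Implicit Defensive.

Import GRing.Theory.
Local Open Scope ring_scope.

Section Graded.

Variables (G : groupType) (R : comPzRingType) (M : lmodType R).

Definition direct_decomposition (V : zmodType) (C : G -> V -> Prop) : Prop :=
  [/\ (forall g, C g 0),
      (forall g x y, C g x -> C g y -> C g (x - y)),
      (forall v, exists (s : seq G) (x : G -> V),
          [/\ uniq s, (forall g, C g (x g)) & v = \sum_(g <- s) x g]) &
      (forall (s : seq G) (x : G -> V), uniq s -> (forall g, C g (x g)) ->
          \sum_(g <- s) x g = 0 -> forall g, g \in s -> x g = 0)].

Definition ring_grading (Rg : G -> R -> Prop) : Prop :=
  direct_decomposition Rg /\
  (forall g h a b, Rg g a -> Rg h b -> Rg (g * h)%g (a * b)).

Definition module_grading (Rg : G -> R -> Prop) (Mg : G -> M -> Prop) : Prop :=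
  direct_decomposition Mg /\
  (forall g h a m, Rg g a -> Mg h m -> Mg (g * h)%g (a *: m)).

Variables (Rg : G -> R -> Prop) (Mg : G -> M -> Prop).

Definition homR (a : R) : Prop := exists g, Rg g a.
Definition homM (m : M) : Prop := exists g, Mg g m.

Definition ideal (I : R -> Prop) : Prop :=
  [/\ I 0, (forall x y, I x -> I y -> I (x + y)) &
      (forall r x, I x -> I (r * x))].

Definition proper_ideal (I : R -> Prop) : Prop := exists r, ~ I r.

Definition graded_ideal (I : R -> Prop) : Prop :=
  ideal I /\
  (forall r, I r -> exists (s : seq G) (x : G -> R),
      [/\ uniq s, (forall g, Rg g (x g) /\ I (x g)) & r = \sum_(g <- s) x g]).

Definition Gr (I : R -> Prop) : R -> Prop := fun r =>
  exists (s : seq G) (x : G -> R),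
    [/\ uniq s, (forall g, Rg g (x g)), r = \sum_(g <- s) x g &
        forall g, g \in s -> exists n : nat, I (x g ^+ n.+1)].

Definition graded_prime_ideal (P : R -> Prop) : Prop :=
  [/\ graded_ideal P, proper_ideal P &
      forall a b, homR a -> homR b -> P (a * b) -> P a \/ P b].

Definition graded_quasi_primary_ideal (q : R -> Prop) : Prop :=
  [/\ graded_ideal q, proper_ideal q &
      forall a b, homR a -> homR b -> q (a * b) -> Gr q a \/ Gr q b].

Definition submodule (N : M -> Prop) : Prop :=
  [/\ N 0, (forall x y, N x -> N y -> N (x + y)) &
      (forall (r : R) x, N x -> N (r *: x))].

Definition proper_submodule (N : M -> Prop) : Prop := exists m, ~ N m.

Definition graded_submodule (N : M -> Prop) : Prop :=
  submodule N /\
  (forall m, N m -> exists (s : seq G) (x : G -> M),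
      [/\ uniq s, (forall g, Mg g (x g) /\ N (x g)) & m = \sum_(g <- s) x g]).

Definition colon (K : M -> Prop) : R -> Prop := fun r => forall m, K (r *: m).

Definition Ann : R -> Prop := fun r => forall m : M, r *: m = 0.

Definition graded_prime_submodule (P : M -> Prop) : Prop :=
  [/\ graded_submodule P, proper_submodule P &
      forall r m, homR r -> homM m -> P (r *: m) -> P m \/ colon P r].

(* Gr_M(K): intersection of all graded prime submodules containing K
   (= M when there is none). *)
Definition GrM (K : M -> Prop) : M -> Prop := fun m =>
  forall P, graded_prime_submodule P -> (forall x, K x -> P x) -> P m.

Definition graded_primeful (K : M -> Prop) : Prop :=
  forall p : R -> Prop, graded_prime_ideal p -> (forall r, colon K r -> p r) ->
    exists P : M -> Prop, [/\ graded_prime_submodule P, (forall x, K x -> P x) &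
                              forall r, colon P r <-> p r].

Definition graded_quasi_primary_submodule (Q : M -> Prop) : Prop :=
  [/\ graded_submodule Q, proper_submodule Q &
      forall r m, homR r -> homM m -> Q (r *: m) -> Gr (colon Q) r \/ GrM Q m].

Definition qpSpec (Q : M -> Prop) : Prop :=
  graded_quasi_primary_submodule Q /\ graded_primeful Q.

Definition qpV (K : M -> Prop) (Q : M -> Prop) : Prop :=
  qpSpec Q /\ (forall r, Gr (colon K) r -> Gr (colon Q) r).

Definition graded_quasi_primaryful : Prop :=
  (forall m : M, m = 0) \/
  ((exists m : M, m <> 0) /\
   forall q : R -> Prop, graded_quasi_primary_ideal q -> (forall r, Ann r -> q r) ->
     exists Q, qpSpec Q /\ forall r, Gr (colon Q) r <-> Gr q r).

(* ---------- Spec_g(R/Ann(M)) via the correspondence theorem ----------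
   A graded prime ideal of Rbar = R/Ann(M) is represented by its preimage in R,
   i.e. a graded prime ideal p of R with Ann(M) <= p.  Under this
   identification bar(I) <= bar(p) iff I <= p (for I >= Ann(M)), and the
   natural map is  phi(Q) = bar(Gr((Q:_R M)))  ~  Gr((Q :_R M)). *)
Definition SpecRbar (p : R -> Prop) : Prop :=
  graded_prime_ideal p /\ (forall r, Ann r -> p r).

Definition VRbar (I : R -> Prop) (p : R -> Prop) : Prop :=
  SpecRbar p /\ (forall r, I r -> p r).

Definition phi (Q : M -> Prop) : R -> Prop := Gr (colon Q).

Definition in_phi_image (F : (M -> Prop) -> Prop) (p : R -> Prop) : Prop :=
  exists Q, F Q /\ forall r, phi Q r <-> p r.

End Graded.
Arguments homR {G R} Rg a.
Arguments homM {G R M} Mg m.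

(* Main.v *)
Require Import Defs.
From mathcomp Require Import all_boot all_order all_algebra.
From Stdlib Require Import Classical.
From mathcomp Require Import zify.
Set Implicit Arguments.
Unset Strict Implicit.
Unset Printing Implicit Defensive.
Import GRing.Theory.
Local Open Scope ring_scope.

Section Gen.
Variables (G : groupType) (V : zmodType) (C : G -> V -> Prop).
Hypothesis hC : direct_decomposition C.

Lemma C0 g : C g 0.
Proof. by case: hC. Qed.
Lemma CB g x y : C g x -> C g y -> C g (x - y).
Proof. by case: hC => _ H _ _; apply: H. Qed.
Lemma CN g x : C g x -> C g (- x).
Proof. by move=> h; rewrite -sub0r; apply: CB => //; apply: C0. Qed.
Lemma CD g x y : C g x -> C g y -> C g (x + y).
Proof. by move=> hx hy; rewrite -[y]opprK; apply: CB => //; apply: CN. Qed.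

Lemma Csum (T : Type) g (l : seq T) (F : T -> V) :
  (forall i, C g (F i)) -> C g (\sum_(i <- l) F i).
Proof.
move=> h; elim: l => [|i l IH]; first by rewrite big_nil; apply: C0.
by rewrite big_cons; apply: CD.
Qed.

Lemma collect (Pr : V -> Prop) : Pr 0 -> (forall x y, Pr x -> Pr y -> Pr (x + y)) ->
  forall l : seq (G * V), (forall i, i \in l -> C i.1 i.2 /\ Pr i.2) ->
  exists (s : seq G) (x : G -> V),
    [/\ uniq s, (forall g, C g (x g) /\ Pr (x g)), (forall g, g \notin s -> x g = 0)
      & \sum_(i <- l) i.2 = \sum_(g <- s) x g].
Proof.
move=> P0 PD; elim=> [|i l IH] Hl.
  exists [::], (fun _ => 0); split => //; first by move=> g; split => //; apply: C0.
  by rewrite !big_nil.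
have [Ci Pi] := Hl i (mem_head _ _).
have [s [x [us Cx x0 e]]] := IH (fun j hj => Hl j (@mem_behead _ (i :: l) _ hj)).
exists (if i.1 \in s then s else i.1 :: s),
       (fun g => if g == i.1 then i.2 + x g else x g); split.
- by case: ifP => // /negbT h /=; rewrite h.
- move=> g; case: eqP => [->|_]; last exact: Cx.
  by have [C1 P1] := Cx i.1; split; [apply: CD|apply: PD].
- move=> g; case: ifP => hin; case: eqP => [e1|ne] hg.
  + by move: hg; rewrite e1 hin.
  + by rewrite x0.
  + by move: hg; rewrite e1 inE eqxx.
  + by move: hg; rewrite inE negb_or => /andP[_ h]; rewrite x0.
- rewrite big_cons e; case: ifP => hin.
  + rewrite (bigD1_seq i.1) //= ?eqxx (bigD1_seq i.1 hin us) /= addrA; congr (_ + _).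
    rewrite eqxx //.
    by apply: eq_bigr => g /negbTE ->.
  + rewrite big_cons eqxx (x0 _ (negbT hin)) addr0; congr (_ + _).
    apply: eq_big_seq => g hg; case: eqP => // e2.
    by move: hin; rewrite -e2 hg.
Qed.

Lemma uniq_dec (s t : seq G) (x y : G -> V) : uniq s -> uniq t ->
  (forall g, C g (x g)) -> (forall g, C g (y g)) ->
  \sum_(g <- s) x g = \sum_(g <- t) y g ->
  forall g, g \in s -> x g = if g \in t then y g else 0.
Proof.
move=> us ut Cx Cy e.
pose u := undup (s ++ t).
have ext (w : seq G) (z : G -> V) : uniq w -> {subset w <= u} ->
    \sum_(g <- w) z g = \sum_(g <- u) (if g \in w then z g else 0).
  move=> uw sw; rewrite -big_mkcond -big_filter; apply: perm_big.
  apply: uniq_perm => //; first by rewrite filter_uniq // undup_uniq.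
  by move=> g; rewrite mem_filter; case h: (g \in w) => //=; rewrite sw.
have su : {subset s <= u} by move=> g hg; rewrite mem_undup mem_cat hg.
have tu : {subset t <= u} by move=> g hg; rewrite mem_undup mem_cat hg orbT.
pose X g := (if g \in s then x g else 0) - (if g \in t then y g else 0).
have CX g : C g (X g).
  by apply: CB; case: ifP => _; rewrite ?Cx ?Cy //; apply: C0.
have sX : \sum_(g <- u) X g = 0.
  by rewrite sumrB -ext // -ext // e subrr.
case: hC => _ _ _ D.
move=> g hg; have := D u X (undup_uniq _) CX sX g (su _ hg).
by rewrite /X hg => /eqP; rewrite subr_eq0 => /eqP.
Qed.

End Gen.

Section Ring.
Variables (G : groupType) (R : comPzRingType) (Rg : G -> R -> Prop).
Hypothesis hR : ring_grading Rg.
Let hRd : direct_decomposition Rg := hR.1.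

Definition nilp (I : R -> Prop) (a : R) := exists n : nat, I (a ^+ n.+1).

Lemma RgM g h a b : Rg g a -> Rg h b -> Rg (g * h)%g (a * b).
Proof. by case: hR => _; apply. Qed.

Lemma RgX g a n : Rg g a -> exists h, Rg h (a ^+ n.+1).
Proof.
move=> ha; elim: n => [|n [h hh]]; first by exists g; rewrite expr1.
by exists (g * h)%g; rewrite exprS; apply: RgM.
Qed.

Section Id.
Variable I : R -> Prop.
Hypothesis hI : ideal I.

Lemma I0 : I 0. Proof. by case: hI. Qed.
Lemma ID x y : I x -> I y -> I (x + y). Proof. by case: hI => _ h _; apply: h. Qed.
Lemma IMl r x : I x -> I (r * x). Proof. by case: hI => _ _ h; apply: h. Qed.
Lemma IMr r x : I x -> I (x * r). Proof. by rewrite mulrC; apply: IMl. Qed.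
Lemma Isum (T : eqType) (l : seq T) (F : T -> R) :
  (forall i, i \in l -> I (F i)) -> I (\sum_(i <- l) F i).
Proof.
elim: l => [|i l IH] h; first by rewrite big_nil; apply: I0.
rewrite big_cons; apply: ID; first by apply: h; rewrite mem_head.
by apply: IH => j hj; apply: h; rewrite inE hj orbT.
Qed.
Lemma IsumT (T : Type) (l : seq T) (F : T -> R) :
  (forall i, I (F i)) -> I (\sum_(i <- l) F i).
Proof.
move=> h; elim: l => [|i l IH]; first by rewrite big_nil; apply: I0.
by rewrite big_cons; apply: ID.
Qed.

Lemma nilp0 : nilp I 0.
Proof. by exists 0%N; rewrite expr1; apply: I0. Qed.

Lemma nilpD a b : nilp I a -> nilp I b -> nilp I (a + b).
Proof.
move=> [na ha] [nb hb]; exists (na + nb)%N; rewrite exprDn.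
rewrite -(big_mkord xpredT (fun i => (a ^+ ((na + nb).+1 - i) * b ^+ i) *+ 'C((na + nb).+1, i))).
apply: IsumT => i; rewrite -mulr_natl; apply: IMl.
case: (leqP nb.+1 i) => hi.
  by rewrite -(subnKC hi) exprD; apply: IMl; apply: IMr.
have -> : ((na + nb).+1 - i = na.+1 + (nb - i))%N.
  by lia.
by rewrite exprD -mulrA; apply: IMr.
Qed.

Lemma nilpM a b : nilp I b -> nilp I (a * b).
Proof. by move=> [n h]; exists n; rewrite exprMn; apply: IMl. Qed.

Lemma nilpX a n : nilp I (a ^+ n.+1) -> nilp I a.
Proof. by move=> [k h]; exists (n.+1 * k.+1).-1; rewrite prednK // exprM. Qed.

Lemma Gr_list (l : seq (G * R)) :
  (forall i, i \in l -> Rg i.1 i.2 /\ nilp I i.2) -> Gr Rg I (\sum_(i <- l) i.2).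
Proof.
move=> h; have [s [x [us Cx _ ->]]] := collect hRd nilp0 nilpD h.
by exists s, x; split => // g; [case: (Cx g) | move=> _; case: (Cx g)].
Qed.

Lemma Gr_hom d a : Rg d a -> nilp I a -> Gr Rg I a.
Proof.
move=> ha na; have := @Gr_list [:: (d, a)]; rewrite big_seq1; apply.
by move=> i; rewrite inE => /eqP ->.
Qed.

Lemma Gr_to_list r : Gr Rg I r -> exists l : seq (G * R),
  (forall i, i \in l -> Rg i.1 i.2 /\ nilp I i.2) /\ r = \sum_(i <- l) i.2.
Proof.
move=> [s [x [us Cx -> Nx]]]; exists [seq (g, x g) | g <- s]; split.
  by move=> i /mapP [g hg ->]; split => //; apply: Nx.
by rewrite big_map.
Qed.

Lemma Gr_ideal : ideal (Gr Rg I).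
Proof.
split.
- by have := @Gr_list [::]; rewrite big_nil; apply.
- move=> x y /Gr_to_list [l1 [h1 ->]] /Gr_to_list [l2 [h2 ->]].
  rewrite -big_cat; apply: Gr_list => i; rewrite mem_cat => /orP[]; auto.
- move=> r x /Gr_to_list [l [h ->]].
  case: hRd => _ _ dec _; have [t [y [_ Cy ->]]] := dec r.
  pose L := [seq (h0, i) | h0 <- t, i <- l].
  have -> : (\sum_(g <- t) y g) * \sum_(i <- l) i.2 =
     \sum_(p <- [seq ((p.1 * p.2.1)%g, y p.1 * p.2.2) | p <- L]) p.2.
    rewrite big_map big_allpairs mulr_suml; apply: eq_bigr => g _.
    by rewrite mulr_sumr.
  apply: Gr_list => p /mapP [[g i] /allpairsP [[g' i'] [hg hi [-> ->]]] ->] /=.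
  by have [h3 h4] := h _ hi; split; [apply: RgM|apply: nilpM].
Qed.

Lemma Gr_graded : graded_ideal Rg (Gr Rg I).
Proof.
split; first exact: Gr_ideal.
move=> r [s [x [us Cx -> Nx]]].
exists s, (fun g => if g \in s then x g else 0); split => //.
  move=> g; case: ifP => hg; first by split => //; apply: (Gr_hom (Cx g)); apply: Nx.
  split; first exact: (C0 hRd).
  by case: Gr_ideal.
by apply: eq_big_seq => g ->.
Qed.

Lemma Gr_hom_inv d y : Rg d y -> Gr Rg I y -> nilp I y.
Proof.
move=> hy [s [x [us Cx e Nx]]].
pose x' := fun g => if g == d then y else 0.
have Cx' g : Rg g (x' g) by rewrite /x'; case: eqP => [->|_] //; apply: (C0 hRd).
have e' : \sum_(g <- [:: d]) x' g = \sum_(g <- s) x g by rewrite big_seq1 /x' eqxx.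
have := uniq_dec hRd (isT : uniq [:: d]) us Cx' Cx e' (mem_head _ _).
rewrite /x' eqxx; case: ifP => hd ->; [exact: Nx | exact: nilp0].
Qed.

Lemma Gr_sub : graded_ideal Rg I -> forall r, I r -> Gr Rg I r.
Proof.
move=> [_ gI] r /gI [s [x [us Cx ->]]]; exists s, x; split => //.
  by move=> g; case: (Cx g).
by move=> g _; exists 0%N; rewrite expr1; case: (Cx g).
Qed.

End Id.

Lemma prime_hom_pow p d x n : graded_prime_ideal Rg p -> Rg d x -> p (x ^+ n.+1) -> p x.
Proof.
move=> [_ _ pr] hx; elim: n => [|n IH]; first by rewrite expr1.
move=> h; have [e he] := RgX n hx.
have H : p x \/ p (x ^+ n.+1).
  by apply: pr; [exists d | exists e | rewrite -exprS].
by case: H => // /IH.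
Qed.

Lemma Gr_le_prime (I p : R -> Prop) : graded_prime_ideal Rg p -> (forall r, I r -> p r) ->
  forall r, Gr Rg I r -> p r.
Proof.
move=> hp hIp r [s [x [us Cx -> Nx]]].
have ip : ideal p by case: hp => [[]].
apply: Isum => // g /Nx [n hn]; apply: (prime_hom_pow (n := n) hp (Cx g)).
exact: hIp.
Qed.

Lemma Gr_prime_eq p : graded_prime_ideal Rg p -> forall r, Gr Rg p r <-> p r.
Proof.
move=> hp r; split; first exact: Gr_le_prime.
by case: hp => gp _ _; apply: Gr_sub => //; case: gp.
Qed.

Lemma prime_qp p : graded_prime_ideal Rg p -> graded_quasi_primary_ideal Rg p.
Proof.
move=> hp; case: (hp) => gp pp pr; split => // a b ha hb /pr [] // h; [left|right];
  by apply/Gr_prime_eq.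
Qed.

End Ring.

From mathcomp Require classical_sets.
From mathcomp Require Import ring.

Section Avoid.
Variables (G : groupType) (R : comPzRingType) (Rg : G -> R -> Prop).
Hypothesis hR : ring_grading Rg.
Let hRd : direct_decomposition Rg := hR.1.

Lemma avoid (I S : R -> Prop) : graded_ideal Rg I -> (exists s0, S s0) ->
  (forall a b, S a -> S b -> S (a * b)) -> (forall s, S s -> ~ I s) ->
  exists p, [/\ graded_prime_ideal Rg p, (forall r, I r -> p r) & forall s, S s -> ~ p s].
Proof.
move=> gI [s0 Ss0] SM SI.
pose cand (A : R -> Prop) := [/\ graded_ideal Rg A, (forall r, I r -> A r) & forall s, S s -> ~ A s].
pose P := fun A : R -> Prop => (forall x, ~ A x) \/ cand A.
have [A [PA maxA]] : exists A, P A /\ forall B, classical_sets.proper A B -> ~ P B.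
  apply: classical_sets.Zorn_bigcup.
  move=> F FP tot.
  have cF A x : F A -> A x -> cand A.
    by move=> FA Ax; case: (FP A FA) => // h; case: (h x).
  rewrite /P /classical_sets.bigcup /=.
  case: (classic (exists A, F A /\ cand A)) => [[A0 [FA0 cA0]]|no]; last first.
    by left => x [A FA Ax]; apply: no; exists A; split => //; apply: cF Ax.
  right; split.
  + split; first split.
    * by exists A0 => //; case: cA0 => [[[]]].
    * move=> x y [A FA Ax] [B FB By].
      case: (tot A B FA FB) => sub.
      - exists B => //; case: (cF B y FB By) => [[[_ hD _] _] _ _].
        by apply: hD => //; apply: sub.
      - exists A => //; case: (cF A x FA Ax) => [[[_ hD _] _] _ _].
        by apply: hD => //; apply: sub.
    * move=> r x [A FA Ax]; exists A => //.
      by case: (cF A x FA Ax) => [[[_ _ hM] _] _ _]; apply: hM.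
    * move=> x [A FA Ax]; case: (cF A x FA Ax) => [[_ gA] _ _].
      have [s [y [us Cy ->]]] := gA x Ax; exists s, y; split => // g.
      by have [h1 h2] := Cy g; split => //; exists A.
  + by move=> r Ir; exists A0 => //; case: cA0 => _ h _; apply: h.
  + by move=> s Ss [A FA As]; case: (cF A s FA As) => _ _ h; apply: (h s).
  have cA : cand A.
    case: PA => // h; exfalso; apply: (maxA I); last by right.
    split; first by move=> x /h.
    by move=> sub; apply: (h 0); apply: sub; case: gI => [[]].
  case: (cA) => gA IA SA.
  have iA : ideal A by case: gA.
  exists A; split => //; split => //; first by exists s0; apply: SA.
  move=> a b [d ha] [e hb] Aab.
  case: (classic (A a)) => Aa; first by left.
  case: (classic (A b)) => Ab; first by right.
  exfalso.
  have ext (c : R) (dc : G) : Rg dc c -> ~ A c -> exists s p r, [/\ S s, A p & s = p + r * c].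
    move=> hc Ac; apply: NNPP => nS.
    pose Ac' := fun x => exists p r, A p /\ x = p + r * c.
    apply: (maxA Ac'); last first.
      right; split.
      * have iAc : ideal Ac'.
          split.
          - by exists 0, 0; split; [apply: I0 | rewrite mul0r addr0].
          - move=> x y [p1 [r1 [h1 ->]]] [p2 [r2 [h2 ->]]].
            exists (p1 + p2), (r1 + r2); split; first by apply: ID.
            by rewrite mulrDl addrACA.
          - move=> r x [p1 [r1 [h1 ->]]]; exists (r * p1), (r * r1); split.
              by apply: IMl.
            by rewrite mulrDr mulrA.
        split => // x [p [r [Ap ->]]].
        case: gA => _ /(_ p Ap) [s [xp [us Cp ->]]].
        case: hRd => _ _ dec _; have [u [y [_ Cy ->]]] := dec r.
        pose l := [seq (g, xp g) | g <- s] ++ [seq ((h0 * dc)%g, y h0 * c) | h0 <- u].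
        have hl : forall i, i \in l -> Rg i.1 i.2 /\ Ac' i.2.
          move=> i; rewrite mem_cat => /orP[] /mapP [g _ ->] /=.
            case: (Cp g) => h1 h2; split => //; exists (xp g), 0; split => //.
            by rewrite mul0r addr0.
          split; first by apply: RgM.
          by exists 0, (y g); split; [apply: I0 | rewrite add0r].
        have AD : forall x y, Ac' x -> Ac' y -> Ac' (x + y).
          by case: iAc.
        have [t [z [ut Cz _ ez]]] := collect hRd (I0 iAc) AD hl.
        exists t, z; split; [exact: ut | by move=> g; case: (Cz g) |].
        by rewrite -ez big_cat !big_map mulr_suml.
      * by move=> r Ir; exists r, 0; split; [apply: IA | rewrite mul0r addr0].
      * by move=> s Ss [p [r [Ap ep]]]; apply: nS; exists s, p, r.
    split.
      by move=> x Ax; exists x, 0; split => //; rewrite mul0r addr0.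
    by move=> sub; apply: Ac; apply: sub; exists 0, 1; split; [apply: I0 | rewrite mul1r add0r].
  have [s1 [p1 [r1 [S1 A1 e1]]]] := ext a d ha Aa.
  have [s2 [p2 [r2 [S2 A2 e2]]]] := ext b e hb Ab.
  apply: (SA (s1 * s2)); first exact: SM.
  have -> : s1 * s2 = p1 * s2 + p2 * (r1 * a) + (r1 * r2) * (a * b).
    by rewrite e1 e2; ring.
  apply: (ID iA); first apply: (ID iA).
  + by apply: (IMr iA).
  + by apply: (IMr iA).
  + by apply: (IMl iA).
Qed.

End Avoid.

From Stdlib Require Import FunctionalExtensionality PropExtensionality.

Section Mod.
Variables (G : groupType) (R : comPzRingType) (M : lmodType R)
  (Rg : G -> R -> Prop) (Mg : G -> M -> Prop).
Hypothesis hR : ring_grading Rg.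
Hypothesis hM : module_grading Rg Mg.
Let hRd : direct_decomposition Rg := hR.1.
Let hMd : direct_decomposition Mg := hM.1.

Lemma MgZ g h a m : Rg g a -> Mg h m -> Mg (g * h)%g (a *: m).
Proof. by case: hM => _; apply. Qed.

Section Sub.
Variable Q : M -> Prop.
Hypothesis sQ : submodule Q.
Lemma Q0 : Q 0. Proof. by case: sQ. Qed.
Lemma QD x y : Q x -> Q y -> Q (x + y). Proof. by case: sQ => _ h _; apply: h. Qed.
Lemma QZ r x : Q x -> Q (r *: x). Proof. by case: sQ => _ _ h; apply: h. Qed.
Lemma Qsum (T : Type) (l : seq T) (F : T -> M) :
  (forall i, Q (F i)) -> Q (\sum_(i <- l) F i).
Proof.
move=> h; elim: l => [|i l IH]; first by rewrite big_nil; apply: Q0.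
by rewrite big_cons; apply: QD.
Qed.

Lemma colon_ideal : ideal (colon Q).
Proof.
split.
- by move=> m; rewrite scale0r; apply: Q0.
- by move=> x y hx hy m; rewrite scalerDl; apply: QD.
- by move=> r x hx m; rewrite -scalerA; apply: QZ.
Qed.

Lemma Ann_colon r : Ann M r -> colon Q r.
Proof. by move=> h m; rewrite h; apply: Q0. Qed.
End Sub.

Lemma colon_graded Q : graded_submodule Mg Q -> graded_ideal Rg (colon Q).
Proof.
move=> [sQ gQ]; split; first exact: colon_ideal.
move=> r hr; case: hRd => _ _ dec _; have [s [x [us Cx er]]] := dec r.
have key h mh g : Mg h mh -> g \in s -> Q (x g *: mh).
  move=> hmh hg.
  have [u [y [uu Cy ey]]] := gQ _ (hr mh).
  pose s2 := [seq (g0 * h)%g | g0 <- s].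
  pose X k := x (k * h^-1)%g *: mh.
  have CX k : Mg k (X k).
    by have := MgZ (Cx (k * h^-1)%g) hmh; rewrite mulgVK.
  have us2 : uniq s2 by rewrite map_inj_uniq // => a b /mulIg.
  have e2 : \sum_(k <- s2) X k = \sum_(k <- u) y k.
    rewrite -ey big_map er scaler_suml; apply: eq_bigr => g0 _.
    by rewrite /X mulgK.
  have := uniq_dec hMd us2 uu CX (fun k => (Cy k).1) e2 (map_f _ hg).
  rewrite /X mulgK => ->; case: ifP => _; first by case: (Cy (g * h)%g).
  exact: Q0.
exists s, (fun g => if g \in s then x g else 0); split => //.
  move=> g; case: ifP => hg; split; [exact: Cx | | exact: (C0 hRd) | ].
  + move=> m; case: hMd => _ _ decM _; have [t [mm [_ Cm ->]]] := decM m.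
    by rewrite scaler_sumr; apply: Qsum => // h; apply: key.
  + exact: Ann_colon (fun m => scale0r m).
by rewrite er; apply: eq_big_seq => g ->.
Qed.

Lemma GrM_D Q x y : GrM Rg Mg Q x -> GrM Rg Mg Q y -> GrM Rg Mg Q (x + y).
Proof.
move=> hx hy P hP hQP; case: (hP) => [[sP _] _ _].
by apply: (QD sP); [apply: hx | apply: hy].
Qed.

Lemma GrM_sum Q (T : Type) (l : seq T) (F : T -> M) :
  (forall i, GrM Rg Mg Q (F i)) -> GrM Rg Mg Q (\sum_(i <- l) F i).
Proof.
move=> h P hP hQP; case: (hP) => [[sP _] _ _].
by apply: Qsum => // i; apply: h.
Qed.

Lemma keyGr Q d c : graded_submodule Mg Q -> graded_primeful Rg Mg Q -> Rg d c ->
  (forall m, GrM Rg Mg Q (c *: m)) -> Gr Rg (colon Q) c.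
Proof.
move=> gQ pf hc hm; apply: NNPP => nG.
have gC := colon_graded gQ.
have iC : ideal (colon Q) by case: gC.
pose S := fun z => exists n, z = c ^+ n.+1.
have SM : forall a b, S a -> S b -> S (a * b).
  move=> a b [n ->] [k ->]; exists (n + k).+1.
  by rewrite -exprD addSn addnS.
have SI : forall s, S s -> ~ colon Q s.
  move=> s [n ->] hs; apply: nG; apply: (Gr_hom hR iC hc).
  by exists n.
have [p [pp Cp Sp]] := avoid hR gC (ex_intro S (c ^+ 1) (ex_intro _ 0%N erefl)) SM SI.
have [P [hP QP eP]] := pf p pp Cp.
apply: (Sp c); first by exists 0%N; rewrite expr1.
by apply/eP => m; apply: hm.
Qed.

Lemma qp_prime Q : qpSpec Rg Mg Q ->
  graded_prime_ideal Rg (Gr Rg (colon Q)) /\ (forall r, Ann M r -> Gr Rg (colon Q) r).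
Proof.
move=> [[gQ pQ qQ] pfQ]; case: (gQ) => sQ _.
have iC := colon_ideal sQ.
have gC := colon_graded gQ.
split; last by move=> r /(Ann_colon sQ) /(Gr_sub gC).
split.
- exact: Gr_graded.
- pose S := fun z : R => z = 1.
  have SM : forall a b, S a -> S b -> S (a * b) by move=> a b -> ->; rewrite /S mul1r.
  have SI : forall s, S s -> ~ colon Q s.
    by move=> s -> h1; case: pQ => m; apply; rewrite -[m]scale1r; apply: h1.
  have [p [pp Cp Sp]] := avoid hR gC (ex_intro S 1 erefl) SM SI.
  case: (pp) => _ [r nr] _; exists r => h; apply: nr.
  exact: (Gr_le_prime hR pp Cp).
- move=> a b [da ha] [db hb] Gab.
  have [n hn] := Gr_hom_inv hR iC (RgM hR ha hb) Gab.
  case: (classic (Gr Rg (colon Q) a)) => Ga; first by left.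
  right.
  have [ea hea] := RgX hR n ha.
  have [eb heb] := RgX hR n hb.
  have Hm : forall m, GrM Rg Mg Q (b ^+ n.+1 *: m).
    move=> m; case: hMd => _ _ decM _; have [t [mm [_ Cm ->]]] := decM m.
    rewrite scaler_sumr; apply: GrM_sum => h.
    have := qQ (a ^+ n.+1) (b ^+ n.+1 *: mm h) (ex_intro _ ea hea)
      (ex_intro _ _ (MgZ heb (Cm h))).
    case.
    + by rewrite scalerA -exprMn; apply: hn.
    + move=> G1; exfalso; apply: Ga; apply: (Gr_hom hR iC ha).
      by apply: (nilpX (n := n)); apply: (Gr_hom_inv hR iC hea).
    + done.
  have G2 := keyGr gQ pfQ heb Hm.
  apply: (Gr_hom hR iC hb); apply: (nilpX (n := n)).
  exact: (Gr_hom_inv hR iC heb G2).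
Qed.

End Mod.

Lemma back_constr (G : groupType) (R : comPzRingType) (M : lmodType R)
  (Rg : G -> R -> Prop) (Mg : G -> M -> Prop) :
  ring_grading Rg -> graded_quasi_primaryful Rg Mg -> forall p, SpecRbar M Rg p ->
  exists Q, qpSpec Rg Mg Q /\ forall r, Gr Rg (colon Q) r <-> p r.
Proof.
move=> hR qpf p [pp Annp]; case: (pp) => _ [r nr] _.
case: qpf => [M0 | [_ H]].
  by exfalso; apply: nr; apply: Annp => m; apply: M0.
have [Q [sQ e]] := H p (prime_qp hR pp) Annp.
exists Q; split => // x; rewrite e; exact: Gr_prime_eq.
Qed.

Theorem theorem3p12 (G : groupType) (R : comPzRingType) (M : lmodType R)
  (Rg : G -> R -> Prop) (Mg : G -> M -> Prop) :
  ring_grading Rg -> module_grading Rg Mg ->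
  graded_quasi_primaryful Rg Mg ->
  forall K : M -> Prop, graded_submodule Mg K ->
    (forall p : R -> Prop,
        in_phi_image Rg (qpV Rg Mg K) p <->
        VRbar M Rg (Gr Rg (colon K)) p) /\
    (forall p : R -> Prop,
        in_phi_image Rg (fun Q => qpSpec Rg Mg Q /\ ~ qpV Rg Mg K Q) p <->
        (SpecRbar M Rg p /\ ~ VRbar M Rg (Gr Rg (colon K)) p)).
Proof.
move=> hR hM qpf K gK.
have eqp (Q : M -> Prop) (p : R -> Prop) : (forall r, phi Rg Q r <-> p r) -> p = Gr Rg (colon Q).
  move=> e; apply: functional_extensionality => r.
  by apply: propositional_extensionality; split => /e.
split => p; split.
- move=> [Q [[sQ hK] e]]; rewrite (eqp Q p e).
  have [pr ann] := qp_prime hR hM sQ.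
  by split => //; split.
- move=> [Sp hKp]; have [Q [sQ e]] := back_constr hR qpf Sp.
  exists Q; split; last exact: e.
  split; first exact: sQ.
  by move=> r hr; apply/(e r); apply: hKp.
- move=> [Q [[sQ nV] e]]; rewrite (eqp Q p e).
  have [pr ann] := qp_prime hR hM sQ.
  split; first by split.
  by move=> [_ h]; apply: nV; split.
- move=> [Sp nV]; have [Q [sQ e]] := back_constr hR qpf Sp.
  exists Q; split; last exact: e.
  split; first exact: sQ.
  move=> [_ h]; apply: nV; split; first exact: Sp.
  by move=> r hr; apply/(e r); apply: h.
Qed.
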